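(* Let $t\geq 4$ be an even integer, let $k\geq 0$ be an integer and let $d$ be an even integer with $0\leq d<t$. Then the multiset $\{1,2^b,t^{tk+d}\}$ admits a special linear realization of type $2$ for every $b\geq t-1$ if $d\equiv 2\pmod 4$ and $t\equiv 2\pmod 4$, and for every $b\geq t-2$ otherwise.
   Context: $\{1,2^b,t^{m}\}$ is the multiset with one $1$, $b$ copies of $2$ and $m$ copies of $t$. For a multiset $L$ of positive integers with $|L|=v-1$, each at most $v-1$, a linear realization of $L$ is a Hamiltonian path $[x_0,\dots,x_{v-1}]$ of the complete graph on $\{0,\dots,v-1\}$ such that the multiset $\{|x_i-x_{i+1}|\}$ equals $L$. It is special of type $2$ if its endpoints are $0$ and $1$. *)

(* Defs.v *)
From mathcomp Require Import all_boot.
Set Implicit Arguments. Unset Strict Implicit. Unset Printing Implicit Defensive.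

Definition absdiff (a b : nat) : nat := (a - b) + (b - a).

Definition edge_lengths (p : seq nat) : seq nat :=
  pairmap absdiff (head 0 p) (behead p).

(* a linear realization of the multiset L (given as a list, up to order):
   a Hamiltonian path of K_v on {0,...,v-1}, v = |L|+1, i.e. an ordering p of
   {0,...,v-1}, whose multiset of edge lengths equals L *)
Definition linear_realization (L : seq nat) (p : seq nat) : Prop :=
  perm_eq p (iota 0 (size L).+1) /\ perm_eq (edge_lengths p) L.

Definition special_type2 (L : seq nat) (p : seq nat) : Prop :=
  linear_realization L p /\
  ((head 0 p = 0 /\ last 0 p = 1) \/ (head 0 p = 1 /\ last 0 p = 0)).

Definition ms_1_2b_tm (b t m : nat) : seq nat := 1 :: nseq b 2 ++ nseq m t.

(* Main.v *)
Require Import Defs.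
From mathcomp Require Import all_boot zify.
Set Implicit Arguments. Unset Strict Implicit.

Fixpoint seg (t b l : nat) : seq nat :=
  match l with 0 => [:: b] | l'.+1 => b :: seg t (b + t) l' end.

Lemma edges_cons_cat x s1 y s2 :
  edge_lengths ((x :: s1) ++ (y :: s2)) =
  edge_lengths (x :: s1) ++ absdiff (last x s1) y :: edge_lengths (y :: s2).
Proof. by rewrite /edge_lengths /= pairmap_cat. Qed.

Lemma edges_rcons x s z :
  edge_lengths (rcons (x :: s) z) = rcons (edge_lengths (x :: s)) (absdiff (last x s) z).
Proof. by rewrite /edge_lengths /= -cats1 pairmap_cat cats1. Qed.

Lemma seg_head t b l : exists s, seg t b l = b :: s.
Proof. by case: l => [|l] /=; eexists. Qed.

Lemma seg_last t b l : last 0 (seg t b l) = b + t * l.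
Proof.
elim: l b => [|l IH] b /=; first by rewrite muln0 addn0.
case: (seg_head t (b + t) l) => s E; rewrite E /=.
have := IH (b + t); rewrite E /= => ->; lia.
Qed.

Lemma seg_edges t b l : edge_lengths (seg t b l) = nseq l t.
Proof.
elim: l b => [|l IH] b //=.
case: (seg_head t (b + t) l) => s E.
have := IH (b + t); rewrite E /edge_lengths /= => ->.
rewrite /absdiff; congr (_ :: _); lia.
Qed.

Lemma rev_seg_head t b l : exists s, rev (seg t b l) = (b + t * l) :: s.
Proof.
have := seg_last t b l.
case: (seg_head t b l) => s ->; rewrite lastI rev_rcons last_rcons => <-; by exists (rev (belast b s)).
Qed.

Lemma rev_seg_last t b l : last 0 (rev (seg t b l)) = b.
Proof.
case: (seg_head t b l) => s ->. by rewrite rev_cons last_rcons.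
Qed.

Lemma rev_seg_edges t b l : edge_lengths (rev (seg t b l)) = nseq l t.
Proof.
elim: l b => [|l IH] b //=.
rewrite rev_cons.
case: (rev_seg_head t (b + t) l) => s E.
rewrite E edges_rcons -E IH.
have : last (b + t + t * l) s = b + t.
  by have := rev_seg_last t (b + t) l; rewrite E.
move=> ->. rewrite /absdiff.
have -> : b + t - b + (b - (b + t)) = t by lia.
by elim: l {IH E} => //= l ->.
Qed.
Definition segS t b l (dir : bool) := if dir then seg t b l else rev (seg t b l).
Definition hS t (B L : nat -> nat) p := if ~~ odd p then B p else B p + t * L p.
Definition lS t (B L : nat -> nat) p := if ~~ odd p then B p + t * L p else B p.
Definition conn t B L p := absdiff (lS t B L p) (hS t B L p.+1).
Definition SS t B L p := segS t (B p) (L p) (~~ odd p).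

Lemma SS_head t B L p : exists s, SS t B L p = hS t B L p :: s.
Proof.
rewrite /SS /segS /hS; case: (odd p) => /=.
- exact: rev_seg_head.
- exact: seg_head.
Qed.

Lemma SS_last t B L p : last 0 (SS t B L p) = lS t B L p.
Proof.
rewrite /SS /segS /lS; case: (odd p) => /=.
- exact: rev_seg_last.
- exact: seg_last.
Qed.

Lemma SS_edges t B L p : edge_lengths (SS t B L p) = nseq (L p) t.
Proof.
rewrite /SS /segS; case: (odd p) => /=.
- exact: rev_seg_edges.
- exact: seg_edges.
Qed.

Lemma snake_edges t B L n m : exists N,
  perm_eq (edge_lengths (flatten (map (SS t B L) (iota m n.+1))))
          (nseq N t ++ map (conn t B L) (iota m n)).
Proof.
elim: n m => [|n IH] m.
  by exists (L m); rewrite /= cats0 SS_edges cats0.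
case: (IH m.+1) => N HN.
exists (L m + N).
rewrite [iota m _]/= [map _ (_ :: _)]/= [flatten _]/=.
case: (SS_head t B L m) => s Es.
move: HN; rewrite [iota m.+1 _]/= [map _ (_ :: _)]/= [flatten (_ :: _)]/=.
case: (SS_head t B L m.+1) => s' Es'.
rewrite Es Es' /= => HN.
rewrite -cat_cons edges_cons_cat.
have -> : last (hS t B L m) s = lS t B L m.
  by have := SS_last t B L m; rewrite Es.
have -> : edge_lengths (hS t B L m :: s) = nseq (L m) t by rewrite -Es SS_edges.
rewrite nseqD -catA perm_cat2l.
have -> : absdiff (lS t B L m) (hS t B L m.+1) = conn t B L m by [].
rewrite -(perm_cons (conn t B L m)) in HN; move/permPl: HN => ->.
by rewrite -cat1s perm_catCA.
Qed.

Lemma seg_shift t b l : seg t (t + b) l = map (addn t) (seg t b l).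
Proof. elim: l b => [|l IH] b //=. by rewrite -addnA IH. Qed.

Lemma perm_flat_cons (g : nat -> nat) (f : nat -> seq nat) s :
  perm_eq (flatten [seq g r :: f r | r <- s]) (map g s ++ flatten (map f s)).
Proof.
elim: s => [|a s IH] //=.
rewrite perm_cons perm_sym perm_catCA perm_cat2l perm_sym //.
Qed.

Lemma chains_cover t k e : 0 < t -> e <= t ->
  perm_eq (flatten [seq seg t r (k + (r < e)) | r <- iota 0 t]) (iota 0 (t * k.+1 + e)).
Proof.
move=> t0 et.
elim: k => [|k IH].
  have -> : iota 0 t = iota 0 e ++ iota e (t - e) by rewrite -iotaD subnKC.
  rewrite map_cat flatten_cat.
  have -> : [seq seg t r (0 + (r < e)) | r <- iota e (t - e)] = [seq [:: r] | r <- iota e (t - e)].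
    apply/eq_in_map => r; rewrite mem_iota => /andP [H1 H2].
    by have -> : (r < e) = false by apply/negbTE; rewrite -leqNgt.
  have -> : [seq seg t r (0 + (r < e)) | r <- iota 0 e] = [seq r :: [:: t + r] | r <- iota 0 e].
    apply/eq_in_map => r; rewrite mem_iota => /andP [H1 H2].
    by rewrite H2 /= addnC.
  rewrite flatten_seq1.
  have H := perm_flat_cons id (fun r => [:: t + r]) (iota 0 e).
  rewrite map_id flatten_map1 in H.
  rewrite -iotaDl addn0 in H.
  rewrite -(perm_cat2r (iota e (t - e))) in H; move/permPl: H => ->.
  have -> : t * 1 + e = e + ((t - e) + e) by lia.
  rewrite iotaD iotaD -catA perm_cat2l.
  have -> : 0 + e = e by [].
  have -> : e + (t - e) = t by lia.
  by rewrite perm_catC.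
rewrite (@eq_map _ _ _ (fun r => r :: map (addn t) (seg t r (k + (r < e))))); last first.
  by move=> r /=; rewrite addnC seg_shift.
apply: (perm_trans (perm_flat_cons id _ _)).
rewrite map_id.
have -> : flatten [seq map (addn t) (seg t r (k + (r<e))) | r <- iota 0 t] =
  map (addn t) (flatten [seq seg t r (k + (r<e)) | r <- iota 0 t]).
  by rewrite map_flatten -map_comp.
have -> : t * k.+2 + e = t + (t * k.+1 + e) by rewrite mulnS addnA.
rewrite iotaD perm_cat2l add0n.
have -> : iota t (t*k.+1+e) = map (addn t) (iota 0 (t*k.+1+e)) by rewrite -iotaDl addn0.
exact: perm_map.
Qed.

Lemma perm_flatten_map (f g : nat -> seq nat) s :
  (forall x, perm_eq (f x) (g x)) -> perm_eq (flatten (map f s)) (flatten (map g s)).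
Proof.
move=> H; elim: s => [|a s IH] //=.
by apply: perm_cat.
Qed.

Lemma perm_inj (c : nat -> nat) n :
  (forall p, p < n -> c p < n) ->
  (forall p q, p < n -> q < n -> c p = c q -> p = q) ->
  perm_eq (map c (iota 0 n)) (iota 0 n).
Proof.
move=> Hr Hi.
have U : uniq (map c (iota 0 n)).
  rewrite map_inj_in_uniq ?iota_uniq // => p q; rewrite !mem_iota /= !add0n.
  exact: Hi.
apply: uniq_perm => //; first exact: iota_uniq.
have Hs : {subset map c (iota 0 n) <= iota 0 n}.
  move=> x /mapP [p]; rewrite !mem_iota /= !add0n => Hp ->; exact: Hr.
have Hsz : size (iota 0 n) <= size (map c (iota 0 n)) by rewrite size_map.
by have [_ E] := uniq_min_size U Hs Hsz.
Qed.

Lemma SS_perm t B L p : perm_eq (SS t B L p) (seg t (B p) (L p)).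
Proof. rewrite /SS /segS; case: (~~ odd p) => //; by rewrite perm_rev. Qed.

Lemma snake_vertices t k e (c : nat -> nat) : 0 < t -> e <= t ->
  perm_eq (map c (iota 0 t)) (iota 0 t) ->
  perm_eq (flatten (map (SS t c (fun p => k + (c p < e))) (iota 0 t)))
          (iota 0 (t * k.+1 + e)).
Proof.
move=> t0 et Hc.
apply: perm_trans.
  apply: (@perm_flatten_map _ (fun p => seg t (c p) (k + (c p < e)))).
  by move=> p; exact: SS_perm.
have -> : [seq seg t (c p) (k + (c p < e)) | p <- iota 0 t] =
          map (fun r => seg t r (k + (r < e))) (map c (iota 0 t)) by rewrite -map_comp.
apply: perm_trans; first exact: (perm_flatten (perm_map _ Hc)).
exact: chains_cover.
Qed.

Lemma map_nseq2 (f : nat -> nat) a n :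
  (forall p, a <= p < a + n -> f p = 2) -> map f (iota a n) = nseq n 2.
Proof.
elim: n a => [|n IH] a H //=.
rewrite H; last by lia.
rewrite IH // => p Hp; apply: H; lia.
Qed.

Lemma conns_perm (f : nat -> nat) N j : j < N ->
  (forall p, p < N -> f p = if p == j then 1 else 2) ->
  perm_eq (map f (iota 0 N)) (1 :: nseq N.-1 2).
Proof.
move=> jN H.
have -> : iota 0 N = iota 0 j ++ j :: iota j.+1 (N - j.+1).
  rewrite {1}(_ : N = j + (N - j.+1).+1); last by lia.
  by rewrite iotaD add0n.
rewrite map_cat /= H // eqxx.
rewrite (@map_nseq2 f 0 j); last by move=> p Hp; rewrite H; [case: eqP => //; lia | lia].
rewrite (@map_nseq2 f j.+1); last by move=> p Hp; rewrite H; [case: eqP => //; lia | lia].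
rewrite -cat1s perm_catCA /= perm_cons -nseqD.
have -> : j + (N - j.+1) = N.-1 by lia.
by [].
Qed.

Lemma absdiffC a b : absdiff a b = absdiff b a.
Proof. by rewrite /absdiff addnC. Qed.

Lemma edges_rev s : edge_lengths (rev s) = rev (edge_lengths s).
Proof.
case: s => [|x s] //.
elim: s x => [|y s IH] x //.
rewrite rev_cons.
have [z [w Ew]] : exists z w, rev (y :: s) = z :: w.
  by rewrite rev_cons; case: (rev s) => [|a u] /=; eexists; eexists.
have Hl : last z w = y by have := congr1 (last 0) Ew; rewrite rev_cons last_rcons /= => ->.
rewrite Ew edges_rcons -Ew IH Hl.
rewrite /edge_lengths /= rev_cons absdiffC //.
Qed.

Definition Good L p := linear_realization L p /\ head 0 p = 0 /\ last 0 p = 1.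

Lemma edges_mapS s : edge_lengths (map S s) = edge_lengths s.
Proof.
case: s => [|x s] //; rewrite /edge_lengths /=.
elim: s x => [|y s IH] x //=.
by rewrite IH /absdiff !subSS.
Qed.

Lemma lift_good b t m p : Good (ms_1_2b_tm b t m) p ->
  Good (ms_1_2b_tm b.+1 t m) (0 :: map S (rev p)).
Proof.
move=> [[Hv He] [Hh Hl]].
have Hsz : size (ms_1_2b_tm b.+1 t m) = (size (ms_1_2b_tm b t m)).+1.
  by rewrite /ms_1_2b_tm /= !size_cat !size_nseq.
set V := size (ms_1_2b_tm b t m) in Hsz Hv.
have [s Es] : exists s, p = 0 :: s.
  case: p Hh Hv {He Hl} => [|x s] /=; last by move=> ->; exists s.
  by move=> _; rewrite perm_sym => /perm_size.
have [u Eu] : exists u, s = rcons u 1.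
  move: Hl; rewrite Es /=; case/lastP: s {Es} => [|u z] /=; first by [].
  by rewrite last_rcons => ->; exists u.
subst p s.
have Er : rev (0 :: rcons u 1) = 1 :: rcons (rev u) 0.
  by rewrite -rcons_cons rev_rcons rev_cons.
split; [split|split].
- rewrite Hsz -[iota 0 V.+2]/(0 :: iota 1 V.+1) perm_cons.
  rewrite (_ : iota 1 V.+1 = map S (iota 0 V.+1)); last by rewrite -[1]/(1 + 0) iotaDl.
  apply: perm_map. by rewrite perm_rev.
- rewrite Er.
  have -> : edge_lengths (0 :: map S (1 :: rcons (rev u) 0)) =
            2 :: edge_lengths (map S (1 :: rcons (rev u) 0)) by [].
  rewrite edges_mapS -Er edges_rev /ms_1_2b_tm /=.
  have He' : perm_eq (2 :: rev (edge_lengths (0 :: rcons u 1))) (2 :: ms_1_2b_tm b t m).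
    by rewrite perm_cons perm_rev.
  move/permPl: He' => ->; rewrite /ms_1_2b_tm.
  by rewrite -cat1s -[1 :: _]cat1s perm_catCA.
- by [].
- by rewrite Er /= map_rcons last_rcons.
Qed.

Lemma size_edges s : size (edge_lengths s) = (size s).-1.
Proof. by case: s => [|x s] //=; rewrite /edge_lengths /= size_pairmap. Qed.

Lemma flatten_head t B L n : 0 < n ->
  head 0 (flatten (map (SS t B L) (iota 0 n))) = hS t B L 0.
Proof.
case: n => [|n] // _; rewrite /= ; case: (SS_head t B L 0) => s -> //.
Qed.

Lemma flatten_last t B L n :
  last 0 (flatten (map (SS t B L) (iota 0 n.+1))) = lS t B L n.
Proof.
rewrite -addn1 iotaD map_cat flatten_cat /= cats0 last_cat.
case: (SS_head t B L (0 + n)) => s E; rewrite E /=.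
by have := SS_last t B L (0 + n); rewrite E /= add0n.
Qed.

Lemma good_from_snake t b m n B L v :
  0 < n ->
  perm_eq (flatten (map (SS t B L) (iota 0 n))) (iota 0 v) ->
  v = b + m + 2 -> v >= n ->
  (exists j, j < n.-1 /\ forall p, p < n.-1 -> conn t B L p = if p == j then 1 else 2) ->
  b = n.-2 ->
  hS t B L 0 = 0 -> lS t B L n.-1 = 1 ->
  Good (ms_1_2b_tm b t m) (flatten (map (SS t B L) (iota 0 n))).
Proof.
move=> n0 Hv Ev vn [j [jn Hj]] Eb H0 H1.
set P := flatten _.
split; [split|split].
- have -> : (size (ms_1_2b_tm b t m)).+1 = v.
    by rewrite /ms_1_2b_tm /= size_cat !size_nseq; lia.
  exact: Hv.
- have [N HN] := snake_edges t B L n.-1 0.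
  rewrite prednK // in HN. rewrite -/P in HN.
  have Hc := conns_perm jn Hj.
  have HS := perm_size HN.
  rewrite size_edges (perm_size Hv) size_iota size_cat size_nseq size_map size_iota in HS.
  rewrite (permPl HN).
  rewrite /ms_1_2b_tm perm_catC -cat_cons.
  have -> : N = m by lia.
  rewrite perm_cat2r.
  rewrite (permPl Hc).
  by rewrite Eb.
- by rewrite /P flatten_head.
- by rewrite /P -(prednK n0) flatten_last.
Qed.

Definition cA h p := if p < h then 2 * p else 2 * (2 * h - 1 - p) + 1.
Definition cB h p := if p == 0 then 0 else if p < h then 2 * h - 2 * p
  else if p == 2 * h - 1 then 1 else 2 * p + 3 - 2 * h.
Definition cC h p := if p == 0 then 0 else if p < h then 2 * h - 2 * p
  else if p == h then 1 else 4 * h + 1 - 2 * p.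
Definition BC h p := if p == h then 1 + 2 * h else if p == 2 * h then 1 else cC h p.
Definition LC h k e p := if p == h then k else if p == 2 * h then 0 else k + (cC h p < e).

Ltac crush :=
  repeat (match goal with
   | |- context [if ?b then _ else _] => case: (boolP b) => ? /=
   | |- context [nat_of_bool ?b] => case: (boolP b) => ? /=
   end); rewrite /absdiff; lia.

Lemma parity p : (exists q, p = 2 * q /\ odd p = false) \/ (exists q, p = 2 * q + 1 /\ odd p = true).
Proof.
case: (boolP (odd p)) => Hp; [right|left]; exists p./2; split => //;
  have := odd_double_half p; rewrite ?Hp ?(negbTE Hp) /=; lia.
Qed.

Lemma connA h k s p : 2 <= h -> ~~ odd s -> s < h -> p < 2 * h - 1 ->
  conn (2 * h) (cA h) (fun q => k + (cA h q < 2 * s)) p = if p == h - 1 then 1 else 2.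
Proof.
move=> h2 so sh ph.
have [q [Eq _]] : exists q, s = 2 * q /\ true.
  by case: (parity s) => [[q [-> _]]|[q [Es E]]]; [exists q|rewrite E in so].
subst s.
rewrite /conn /lS /hS /=.
move: ph; case: (parity p) => [[r [-> ->]]|[r [-> ->]]] /= ph; rewrite /cA; crush.
Qed.

Lemma connB h k s p : 2 <= h -> ~~ odd h -> odd s -> s < h -> p < 2 * h - 1 ->
  conn (2 * h) (cB h) (fun q => k + (cB h q < 2 * s)) p = if p == h - 1 then 1 else 2.
Proof.
move=> h2 ho so sh.
have [g Eg] : exists g, h = 2 * g.
  by case: (parity h) => [[g [-> _]]|[g [Es E]]]; [exists g|rewrite E in ho].
have [q Eq] : exists q, s = 2 * q + 1.
  by case: (parity s) => [[q [Es E]]|[q [-> _]]]; [rewrite E in so|exists q].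
subst s h.
rewrite /conn /lS /hS /=.
case: (parity p) => [[r [-> ->]]|[r [-> ->]]] /= ph; rewrite /cB; crush.
Qed.

Lemma connC h k s p : 2 <= h -> odd h -> odd s -> s < h -> p < 2 * h ->
  conn (2 * h) (BC h) (LC h k (2 * s + 1)) p = if p == h - 1 then 1 else 2.
Proof.
move=> h2 ho so sh.
have [g Eg] : exists g, h = 2 * g + 1.
  by case: (parity h) => [[g [Es E]]|[g [-> _]]]; [rewrite E in ho|exists g].
have [q Eq] : exists q, s = 2 * q + 1.
  by case: (parity s) => [[q [Es E]]|[q [-> _]]]; [rewrite E in so|exists q].
subst s h.
rewrite /conn /lS /hS /=.
case: (parity p) => [[r [-> ->]]|[r [-> ->]]] /= ph; rewrite /BC /LC /cC; crush.
Qed.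

Ltac crush2 :=
  repeat (match goal with
   | |- context [if ?b then _ else _] => case: (boolP b) => ? /=
   end); lia.

Lemma permA h : perm_eq (map (cA h) (iota 0 (2 * h))) (iota 0 (2 * h)).
Proof. apply: perm_inj => [p Hp|p q Hp Hq]; rewrite /cA; crush2. Qed.

Lemma permB h : 1 <= h -> perm_eq (map (cB h) (iota 0 (2 * h))) (iota 0 (2 * h)).
Proof. move=> ?; apply: perm_inj => [p Hp|p q Hp Hq]; rewrite /cB; crush2. Qed.

Lemma permC h : 1 <= h -> perm_eq (map (cC h) (iota 0 (2 * h))) (iota 0 (2 * h)).
Proof. move=> ?; apply: perm_inj => [p Hp|p q Hp Hq]; rewrite /cC; crush2. Qed.

Lemma vertC h k e : odd h -> 1 < e ->
  perm_eq (flatten (map (SS (2 * h) (BC h) (LC h k e)) (iota 0 (2 * h).+1)))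
          (flatten (map (SS (2 * h) (cC h) (fun p => k + (cC h p < e))) (iota 0 (2 * h)))).
Proof.
move=> ho e1.
have h1 : 0 < h by case: h ho.
have Ei : iota 0 (2 * h) = iota 0 h ++ h :: iota h.+1 (h.-1).
  rewrite (_ : 2 * h = h + (h.-1).+1); last by lia.
  by rewrite iotaD add0n.
rewrite (_ : iota 0 (2 * h).+1 = iota 0 (2 * h) ++ [:: 2 * h]); last by rewrite -[(2 * h).+1]addn1 iotaD.
rewrite Ei /= !map_cat !flatten_cat /= cats0.
have E1 : [seq SS (2 * h) (BC h) (LC h k e) p | p <- iota 0 h] =
          [seq SS (2 * h) (cC h) (fun p => k + (cC h p < e)) p | p <- iota 0 h].
  apply/eq_in_map => p; rewrite mem_iota => /andP [_ Hp].
  rewrite /SS /BC /LC.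
  have -> : (p == h) = false by apply/negbTE; rewrite neq_ltn Hp.
  have -> : (p == 2 * h) = false by apply/negbTE; lia.
  by [].
have E2 : [seq SS (2 * h) (BC h) (LC h k e) p | p <- iota h.+1 h.-1] =
          [seq SS (2 * h) (cC h) (fun p => k + (cC h p < e)) p | p <- iota h.+1 h.-1].
  apply/eq_in_map => p; rewrite mem_iota => /andP [Hp1 Hp].
  rewrite /SS /BC /LC.
  have -> : (p == h) = false by apply/negbTE; lia.
  have -> : (p == 2 * h) = false by apply/negbTE; lia.
  by [].
rewrite E1 E2 -catA perm_cat2l.
have -> : SS (2 * h) (BC h) (LC h k e) (2 * h) = [:: 1].
  rewrite /SS /BC /LC eqxx.
  have -> : (2 * h == h) = false by apply/negbTE; lia.
  by rewrite oddM /=.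
have -> : SS (2 * h) (BC h) (LC h k e) h = rev (seg (2 * h) (1 + 2 * h) k).
  by rewrite /SS /BC /LC eqxx ho.
have -> : SS (2 * h) (cC h) (fun p => k + (cC h p < e)) h = rev (seg (2 * h) 1 k.+1).
  rewrite /SS /cC ho.
  have -> : (h == 0) = false by apply/negbTE; lia.
  rewrite ltnn eqxx e1 addn1 //.
rewrite [seg _ 1 _]/= rev_cons -cats1 -!catA perm_cat2l.
by rewrite perm_catC.
Qed.

Lemma lift_iter b t m p n : Good (ms_1_2b_tm b t m) p -> exists p', Good (ms_1_2b_tm (b + n) t m) p'.
Proof.
move=> H; elim: n => [|n [p' IH]]; first by exists p; rewrite addn0.
by exists (0 :: map S (rev p')); rewrite addnS; exact: lift_good.
Qed.

Lemma odd_pred2 h : 0 < h -> (2 * h).-1 = (2 * (h - 1)).+1 /\ odd (2 * (h - 1)).+1.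
Proof. move=> h0; split; first lia. by rewrite /= oddM. Qed.

Lemma caseA h k s : 2 <= h -> ~~ odd s -> s < h ->
  exists p, Good (ms_1_2b_tm (2 * h - 2) (2 * h) (2 * h * k + 2 * s)) p.
Proof.
move=> h2 so sh.
exists (flatten (map (SS (2 * h) (cA h) (fun q => k + (cA h q < 2 * s))) (iota 0 (2 * h)))).
apply: (@good_from_snake _ _ _ _ _ _ (2 * h * k.+1 + 2 * s)).
- lia.
- apply: snake_vertices; [lia | lia | exact: permA].
- rewrite mulnS; lia.
- rewrite mulnS; lia.
- exists (h - 1); split; first lia.
  move=> p Hp; apply: connA => //; lia.
- lia.
- by rewrite /hS /cA /=; have -> : 0 < h by lia.
- have [-> Ho] := odd_pred2 (ltnW h2).
  rewrite /lS Ho /= /cA.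
  have -> : ((2 * (h - 1)).+1 < h) = false by apply/negbTE; lia.
  lia.
Qed.

Lemma caseB h k s : 2 <= h -> ~~ odd h -> odd s -> s < h ->
  exists p, Good (ms_1_2b_tm (2 * h - 2) (2 * h) (2 * h * k + 2 * s)) p.
Proof.
move=> h2 ho so sh.
exists (flatten (map (SS (2 * h) (cB h) (fun q => k + (cB h q < 2 * s))) (iota 0 (2 * h)))).
apply: (@good_from_snake _ _ _ _ _ _ (2 * h * k.+1 + 2 * s)).
- lia.
- apply: snake_vertices; [lia | lia | apply: permB; lia].
- rewrite mulnS; lia.
- rewrite mulnS; lia.
- exists (h - 1); split; first lia.
  move=> p Hp; apply: connB => //; lia.
- lia.
- by rewrite /hS /cB /=.
- have [-> Ho] := odd_pred2 (ltnW h2).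
  rewrite /lS Ho /= /cB.
  have -> : ((2 * (h - 1)).+1 == 0) = false by [].
  have -> : ((2 * (h - 1)).+1 < h) = false by apply/negbTE; lia.
  have -> : ((2 * (h - 1)).+1 == 2 * h - 1) = true by apply/eqP; lia.
  by [].
Qed.

Lemma caseC h k s : 2 <= h -> odd h -> odd s -> s < h ->
  exists p, Good (ms_1_2b_tm (2 * h - 1) (2 * h) (2 * h * k + 2 * s)) p.
Proof.
move=> h2 ho so sh.
have s1 : 0 < s by case: s so sh.
exists (flatten (map (SS (2 * h) (BC h) (LC h k (2 * s + 1))) (iota 0 (2 * h).+1))).
apply: (@good_from_snake _ _ _ _ _ _ (2 * h * k.+1 + (2 * s + 1))).
- lia.
- apply: perm_trans; first (apply: vertC => //; lia).
  apply: snake_vertices; [lia | lia | apply: permC; lia].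
- rewrite mulnS; lia.
- rewrite mulnS; lia.
- exists (h - 1); split; first lia.
  move=> p Hp; apply: connC => //; lia.
- lia.
- rewrite /hS /BC /cC /=.
  have -> : (0 == h) = false by apply/negbTE; lia.
  have -> : (0 == 2 * h) = false by apply/negbTE; lia.
  by [].
- rewrite /lS /= oddM /= /BC /LC eqxx.
  have -> : (2 * h == h) = false by apply/negbTE; lia.
  lia.
Qed.

Lemma good_special L p : Good L p -> special_type2 L p.
Proof. by move=> [H [H1 H2]]; split => //; left. Qed.

Theorem proposition3p9 (t k d b : nat) :
  4 <= t -> ~~ odd t -> ~~ odd d -> d < t ->
  (if (d %% 4 == 2) && (t %% 4 == 2) then t - 1 <= b else t - 2 <= b) ->
  exists p : seq nat, special_type2 (ms_1_2b_tm b t (t * k + d)) p.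
Proof.
move=> t4 te de dt Hb.
have [h [Et _]] : exists h, t = 2 * h /\ true.
  by case: (parity t) => [[h [-> _]]|[h [_ E]]]; [exists h|rewrite E in te].
have [s [Ed _]] : exists s, d = 2 * s /\ true.
  by case: (parity d) => [[s [-> _]]|[s [_ E]]]; [exists s|rewrite E in de].
subst t d.
have h2 : 2 <= h by lia.
have sh : s < h by lia.
have Hb2 : 2 * h - 2 <= b by move: Hb; case: ifP => _; lia.
suff [b0 [p [Hb0 Hp]]] : exists b0 p, b0 <= b /\ Good (ms_1_2b_tm b0 (2 * h) (2 * h * k + 2 * s)) p.
  have [p' Hp'] := lift_iter (b - b0) Hp.
  exists p'; apply: good_special; by rewrite subnKC in Hp'.
case: (parity s) => [[q [Es so]]|[q [Es so]]].
- have [p Hp] := caseA k h2 (negbT so) sh.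
  by exists (2 * h - 2), p.
- case: (parity h) => [[g [Eh ho]]|[g [Eh ho]]].
  + have [p Hp] := caseB k h2 (negbT ho) so sh.
    by exists (2 * h - 2), p.
  + have [p Hp] := caseC k h2 ho so sh.
    exists (2 * h - 1), p; split => //.
    move: Hb.
    have -> : (2 * s %% 4 == 2) && (2 * h %% 4 == 2) = true.
      by apply/andP; split; apply/eqP; lia.
    by [].
Qed.
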